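(* For every integer $n\ge 0$ and every $\mathbf t\in\mathbb R^4_H$, $$D_n^H(\mathbf t)=\Theta_{n+1}(\mathbf t)-\Theta_n(\mathbf t),\qquad\text{where}\quad \Theta_n(\mathbf t):=\prod_{j=1}^4\frac{\sin \pi n t_j}{\sin \pi t_j}.$$
   Context: Let $\mathbb R^4_H=\{\mathbf t\in\mathbb R^4: t_1+t_2+t_3+t_4=0\}$ and $\mathbb Z^4_H=\mathbb Z^4\cap\mathbb R^4_H$. Let $\mathbb H=\{\mathbf k\in\mathbb Z^4_H: k_1\equiv k_2\equiv k_3\equiv k_4 \pmod 4\}$. For $n\ge 0$ let $\mathbb H_n^*=\{\mathbf k\in\mathbb H: -4n\le k_i-k_j\le 4n \text{ for all } 1\le i<j\le 4\}$, and define the Dirichlet kernel $D_n^H(\mathbf t)=\sum_{\mathbf k\in\mathbb H_n^*}e^{\frac{\pi i}{2}\mathbf k\cdot\mathbf t}$ for $\mathbf t\in\mathbb R^4_H$. The quotients $\frac{\sin\pi n t}{\sin \pi t}$ are understood as their continuous extensions at integer $t$. *)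

(* Defs.v *)
From Stdlib Require Import Reals ZArith List Lia Lra.
From Coquelicot Require Import Coquelicot.
Open Scope R_scope.

Definition cis (theta : R) : C := (cos theta, sin theta).

(* The quotient sin(pi n t)/sin(pi t), extended continuously at the zeros of
   sin(pi t) (i.e. at integer t) by its limit n cos(pi n t)/cos(pi t). *)
Definition sinq (n : nat) (t : R) : R :=
  if Req_EM_T (sin (PI * t)) 0
  then INR n * cos (PI * INR n * t) / cos (PI * t)
  else sin (PI * INR n * t) / sin (PI * t).

Definition Theta (n : nat) (t1 t2 t3 t4 : R) : R :=
  sinq n t1 * sinq n t2 * sinq n t3 * sinq n t4.

Definition Zvec4 := (Z * Z * Z * Z)%type.

Definition diff_ok (n : nat) (a b : Z) : bool :=
  (Z.leb (- 4 * Z.of_nat n) (a - b) && Z.leb (a - b) (4 * Z.of_nat n))%bool.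

Definition in_Hstar (n : nat) (k : Zvec4) : bool :=
  let '(k1, k2, k3, k4) := k in
  (Z.eqb (k1 + k2 + k3 + k4) 0 &&
   Z.eqb (k1 mod 4) (k2 mod 4) && Z.eqb (k1 mod 4) (k3 mod 4) &&
   Z.eqb (k1 mod 4) (k4 mod 4) &&
   diff_ok n k1 k2 && diff_ok n k1 k3 && diff_ok n k1 k4 &&
   diff_ok n k2 k3 && diff_ok n k2 k4 && diff_ok n k3 k4)%bool.

Definition Zrange (M : nat) : list Z :=
  map (fun i => (Z.of_nat i - Z.of_nat M)%Z) (seq 0 (2 * M + 1)).

(* A box in Z^4 that contains H_n^*: if k is in H_n^* then
   4 k_i = sum_j (k_i - k_j), so |k_i| <= 3n <= 12n. *)
Definition box (n : nat) : list Zvec4 :=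
  let r := Zrange (12 * n) in
  flat_map (fun a => flat_map (fun b => flat_map (fun c => map (fun d => (a,b,c,d)) r) r) r) r.

Definition Hstar (n : nat) : list Zvec4 :=
  filter (in_Hstar n) (box n).

Definition Csum (l : list C) : C := fold_right Cplus (RtoC 0) l.

Definition dot4 (k : Zvec4) (t1 t2 t3 t4 : R) : R :=
  let '(k1, k2, k3, k4) := k in
  IZR k1 * t1 + IZR k2 * t2 + IZR k3 * t3 + IZR k4 * t4.

Definition DH (n : nat) (t1 t2 t3 t4 : R) : C :=
  Csum (map (fun k => cis (PI / 2 * dot4 k t1 t2 t3 t4)) (Hstar n)).

(* Main.v *)
Require Import Defs.
From Stdlib Require Import Reals ZArith List Lia Lra Permutation.
From Coquelicot Require Import Coquelicot.
Open Scope R_scope.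

Lemma NoDup_flat_map' {A B} (f : A -> list B) (l : list A) :
  NoDup l -> (forall x, In x l -> NoDup (f x)) ->
  (forall x y z, In x l -> In y l -> In z (f x) -> In z (f y) -> x = y) ->
  NoDup (flat_map f l).
Proof.
  induction l as [|a l IH]; intros Hl Hf Hi; simpl. constructor.
  inversion Hl; subst. apply NoDup_app.
  - apply Hf; simpl; auto.
  - apply IH; auto. intros; apply Hf; simpl; auto.
    intros; eapply Hi; simpl; eauto.
  - intros z Hz Hz'. apply in_flat_map in Hz' as [y [Hy Hzy]].
    assert (a = y) by (eapply Hi; simpl; eauto). subst. contradiction.
Qed.

Definition prod4 {A} (r1 r2 r3 r4 : list A) : list (A*A*A*A) :=
  flat_map (fun a => flat_map (fun b => flat_map (fun c => map (fun d => (a,b,c,d)) r4) r3) r2) r1.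

Lemma in_prod4 {A} (r1 r2 r3 r4 : list A) a b c d :
  In (a,b,c,d) (prod4 r1 r2 r3 r4) <-> In a r1 /\ In b r2 /\ In c r3 /\ In d r4.
Proof.
  unfold prod4. split.
  - intros H. apply in_flat_map in H as [a' [Ha H]].
    apply in_flat_map in H as [b' [Hb H]].
    apply in_flat_map in H as [c' [Hc H]].
    apply in_map_iff in H as [d' [E Hd]]. inversion E; subst. auto.
  - intros [Ha [Hb [Hc Hd]]]. apply in_flat_map; exists a; split; auto.
    apply in_flat_map; exists b; split; auto.
    apply in_flat_map; exists c; split; auto.
    apply in_map_iff; exists d; split; auto.
Qed.

Lemma NoDup_prod4 {A} (r1 r2 r3 r4 : list A) :
  NoDup r1 -> NoDup r2 -> NoDup r3 -> NoDup r4 -> NoDup (prod4 r1 r2 r3 r4).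
Proof.
  intros H1 H2 H3 H4. unfold prod4.
  apply NoDup_flat_map'; auto.
  2:{ intros x y z _ _ Hx Hy.
      apply in_flat_map in Hx as [? [_ Hx]]. apply in_flat_map in Hx as [? [_ Hx]].
      apply in_map_iff in Hx as [? [<- _]].
      apply in_flat_map in Hy as [? [_ Hy]]. apply in_flat_map in Hy as [? [_ Hy]].
      apply in_map_iff in Hy as [? [E _]]. inversion E; auto. }
  intros a _. apply NoDup_flat_map'; auto.
  2:{ intros x y z _ _ Hx Hy.
      apply in_flat_map in Hx as [? [_ Hx]].
      apply in_map_iff in Hx as [? [<- _]].
      apply in_flat_map in Hy as [? [_ Hy]].
      apply in_map_iff in Hy as [? [E _]]. inversion E; auto. }
  intros b _. apply NoDup_flat_map'; auto.
  2:{ intros x y z _ _ Hx Hy.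
      apply in_map_iff in Hx as [? [<- _]].
      apply in_map_iff in Hy as [? [E _]]. inversion E; auto. }
  intros c _. apply FinFun.Injective_map_NoDup; auto.
  intros x y E. inversion E; auto.
Qed.

Lemma in_Zrange M z : In z (Zrange M) <-> (- Z.of_nat M <= z <= Z.of_nat M)%Z.
Proof.
  unfold Zrange. rewrite in_map_iff. split.
  - intros [i [<- Hi]]. apply in_seq in Hi. lia.
  - intros H. exists (Z.to_nat (z + Z.of_nat M)). split. lia. apply in_seq. lia.
Qed.

Lemma NoDup_Zrange M : NoDup (Zrange M).
Proof.
  unfold Zrange. apply FinFun.Injective_map_NoDup. intros x y E; lia. apply seq_NoDup.
Qed.

Definition rn (n : nat) : list Z := map Z.of_nat (seq 0 (S n)).
Lemma in_rn n z : In z (rn n) <-> (0 <= z <= Z.of_nat n)%Z.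
Proof.
  unfold rn. rewrite in_map_iff. split.
  - intros [i [<- Hi]]. apply in_seq in Hi. lia.
  - intros H. exists (Z.to_nat z). split. lia. apply in_seq. lia.
Qed.
Lemma NoDup_rn n : NoDup (rn n).
Proof. unfold rn. apply FinFun.Injective_map_NoDup. intros x y E; lia. apply seq_NoDup. Qed.

Definition P (n : nat) : list Zvec4 := prod4 (rn n) (rn n) (rn n) (rn n).

Definition phi (m : Zvec4) : Zvec4 :=
  let '(a,b,c,d) := m in let s := (a+b+c+d)%Z in
  (4*a - s, 4*b - s, 4*c - s, 4*d - s)%Z.

Definition hz (m : Zvec4) : bool :=
  let '(a,b,c,d) := m in (Z.eqb a 0 || Z.eqb b 0 || Z.eqb c 0 || Z.eqb d 0)%bool.

Lemma hz_iff a b c d : hz (a,b,c,d) = true <-> (a = 0 \/ b = 0 \/ c = 0 \/ d = 0)%Z.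
Proof. unfold hz. rewrite !Bool.orb_true_iff, !Z.eqb_eq. tauto. Qed.

Lemma in_Hstar_iff n k1 k2 k3 k4 : in_Hstar n (k1,k2,k3,k4) = true <->
  ((k1+k2+k3+k4 = 0) /\ k1 mod 4 = k2 mod 4 /\ k1 mod 4 = k3 mod 4 /\ k1 mod 4 = k4 mod 4 /\
   -4*Z.of_nat n <= k1 - k2 <= 4 * Z.of_nat n /\
   -4*Z.of_nat n <= k1 - k3 <= 4 * Z.of_nat n /\
   -4*Z.of_nat n <= k1 - k4 <= 4 * Z.of_nat n /\
   -4*Z.of_nat n <= k2 - k3 <= 4 * Z.of_nat n /\
   -4*Z.of_nat n <= k2 - k4 <= 4 * Z.of_nat n /\
   -4*Z.of_nat n <= k3 - k4 <= 4 * Z.of_nat n)%Z.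
Proof.
  unfold in_Hstar, diff_ok. rewrite !Bool.andb_true_iff, !Z.eqb_eq, !Z.leb_le. tauto.
Qed.

Lemma mod4_shift x q : ((x + 4*q) mod 4 = x mod 4)%Z.
Proof. rewrite Z.mul_comm. apply Z_mod_plus_full. Qed.

Lemma mod4_ex a b : (a mod 4 = b mod 4)%Z -> exists q, (b = a + 4*q)%Z.
Proof. intros. exists (b/4-a/4)%Z. pose proof (Z.div_mod a 4). pose proof (Z.div_mod b 4). lia. Qed.

Lemma in_Hstar_list n k : In k (Hstar n) <-> in_Hstar n k = true.
Proof.
  unfold Hstar. rewrite filter_In. split; [tauto|]. intros H; split; auto.
  destruct k as [[[k1 k2] k3] k4]. unfold box. fold (prod4 (Zrange (12*n)) (Zrange (12*n)) (Zrange (12*n)) (Zrange (12*n))).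
  apply in_prod4. rewrite !in_Zrange. apply in_Hstar_iff in H. lia.
Qed.

Lemma key_in n k : In k (Hstar n) <-> In k (map phi (filter hz (P n))).
Proof.
  rewrite in_Hstar_list, in_map_iff. split.
  - destruct k as [[[k1 k2] k3] k4]. intros H. apply in_Hstar_iff in H.
    destruct H as [Hs [H2 [H3 [H4 Hb]]]].
    destruct (mod4_ex _ _ H2) as [q2 E2]. destruct (mod4_ex _ _ H3) as [q3 E3].
    destruct (mod4_ex _ _ H4) as [q4 E4].
    set (qm := Z.min 0 (Z.min q2 (Z.min q3 q4))).
    exists (0 - qm, q2 - qm, q3 - qm, q4 - qm)%Z. split.
    + unfold phi. f_equal; [f_equal; [f_equal|]|]; unfold qm in *; lia.
    + apply filter_In. split. unfold P. apply in_prod4. rewrite !in_rn. unfold qm; lia.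
      apply hz_iff. unfold qm; lia.
  - intros [[[[a b] c] d] [<- Hm]]. apply filter_In in Hm as [Hm Hh].
    apply in_prod4 in Hm. rewrite !in_rn in Hm. apply hz_iff in Hh.
    unfold phi. apply in_Hstar_iff.
    assert (HH: forall x y, ((4*x - (a+b+c+d)) mod 4 = (4*y - (a+b+c+d)) mod 4)%Z).
    { intros x y. replace (4*x - (a+b+c+d))%Z with (-(a+b+c+d) + 4*x)%Z by ring.
      replace (4*y - (a+b+c+d))%Z with (-(a+b+c+d) + 4*y)%Z by ring.
      rewrite !mod4_shift. reflexivity. }
    repeat split; try lia; apply HH.
Qed.

Lemma tuple_eq {A} (x1 x2 x3 x4 y1 y2 y3 y4 : A) : (x1,x2,x3,x4) = (y1,y2,y3,y4) -> x1=y1 /\ x2=y2 /\ x3=y3 /\ x4=y4.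
Proof. intros E; inversion E; auto. Qed.

Lemma key_perm n : Permutation (map phi (filter hz (P n))) (Hstar n).
Proof.
  apply NoDup_Permutation.
  - apply FinFun.Injective_map_NoDup_in.
    + intros [[[a b] c] d] [[[a' b'] c'] d'] Hx Hy E.
      apply filter_In in Hx as [Hx Hhx]. apply filter_In in Hy as [Hy Hhy].
      apply in_prod4 in Hx, Hy. rewrite !in_rn in Hx, Hy.
      apply hz_iff in Hhx, Hhy. unfold phi in E. apply tuple_eq in E as [E1 [E2 [E3 E4]]].
      assert (Hd: (a - a' = b - b' /\ a - a' = c - c' /\ a - a' = d - d')%Z) by lia.
      assert (a = a')%Z by (destruct Hhx as [?|[?|[?|?]]]; destruct Hhy as [?|[?|[?|?]]]; lia).
      f_equal; [f_equal; [f_equal|]|]; lia.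
    + apply NoDup_filter. apply NoDup_prod4; apply NoDup_rn.
  - unfold Hstar. apply NoDup_filter. apply NoDup_prod4; apply NoDup_Zrange.
  - intros; symmetry; apply key_in.
Qed.
Lemma Csum_app l1 l2 : Csum (l1 ++ l2) = Cplus (Csum l1) (Csum l2).
Proof. induction l1; simpl. ring. rewrite IHl1. ring. Qed.

Lemma Csum_perm l l' : Permutation l l' -> Csum l = Csum l'.
Proof. induction 1; simpl. reflexivity. rewrite IHPermutation; reflexivity. rewrite !Cplus_assoc, (Cplus_comm y x). reflexivity. rewrite IHPermutation1; auto. Qed.

Lemma Csum_map_filter {A} (p : A -> bool) g l :
  Csum (map g (filter p l)) = Csum (map (fun x => if p x then g x else RtoC 0) l).
Proof. induction l; simpl; auto. destruct (p a); simpl; rewrite IHl; auto. ring. Qed.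

Lemma Csum_map_sub {A} (f g : A -> C) l :
  Csum (map (fun x => Cminus (f x) (g x)) l) = Cminus (Csum (map f l)) (Csum (map g l)).
Proof. induction l; simpl. ring. rewrite IHl. ring. Qed.

Lemma Csum_scal_l {A} k (f : A -> C) l :
  Csum (map (fun x => Cmult k (f x)) l) = Cmult k (Csum (map f l)).
Proof. induction l; simpl. ring. rewrite IHl. ring. Qed.

Lemma Csum_scal_r {A} k (f : A -> C) l :
  Csum (map (fun x => Cmult (f x) k) l) = Cmult (Csum (map f l)) k.
Proof. induction l; simpl. ring. rewrite IHl. ring. Qed.

Lemma Csum_flat_map {A B} (f : A -> list B) (g : B -> C) l :
  Csum (map g (flat_map f l)) = Csum (map (fun x => Csum (map g (f x))) l).
Proof. induction l; simpl; auto. rewrite map_app, Csum_app, IHl. auto. Qed.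

Lemma Csum_prod4 {A} (f1 f2 f3 f4 : A -> C) r1 r2 r3 r4 :
  Csum (map (fun m : A*A*A*A => let '(a,b,c,d) := m in
              Cmult (Cmult (Cmult (f1 a) (f2 b)) (f3 c)) (f4 d)) (prod4 r1 r2 r3 r4))
  = Cmult (Cmult (Cmult (Csum (map f1 r1)) (Csum (map f2 r2))) (Csum (map f3 r3))) (Csum (map f4 r4)).
Proof.
  unfold prod4. rewrite Csum_flat_map.
  transitivity (Csum (map (fun a => Cmult (Cmult (Cmult (f1 a) (Csum (map f2 r2))) (Csum (map f3 r3))) (Csum (map f4 r4))) r1)).
  { f_equal. apply map_ext. intro a. rewrite Csum_flat_map.
    transitivity (Csum (map (fun b => Cmult (Cmult (Cmult (f1 a) (f2 b)) (Csum (map f3 r3))) (Csum (map f4 r4))) r2)).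
    { f_equal. apply map_ext. intro b. rewrite Csum_flat_map.
      transitivity (Csum (map (fun c => Cmult (Cmult (Cmult (f1 a) (f2 b)) (f3 c)) (Csum (map f4 r4))) r3)).
      { f_equal. apply map_ext. intro c. rewrite map_map.
        exact (Csum_scal_l (Cmult (Cmult (f1 a) (f2 b)) (f3 c)) f4 r4). }
      rewrite Csum_scal_r, Csum_scal_l. reflexivity. }
    rewrite Csum_scal_r, Csum_scal_r, Csum_scal_l. reflexivity. }
  rewrite !Csum_scal_r. reflexivity.
Qed.

Lemma cis_add a b : Cmult (cis a) (cis b) = cis (a + b).
Proof. unfold cis, Cmult; simpl. rewrite cos_plus, sin_plus. f_equal; ring. Qed.

Lemma cisR_mult a b x y :
  Cmult (Cmult (cis a) (RtoC x)) (Cmult (cis b) (RtoC y)) = Cmult (cis (a+b)) (RtoC (x*y)).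
Proof. unfold cis, Cmult, RtoC; simpl. rewrite cos_plus, sin_plus. f_equal; ring. Qed.

Lemma sin_mult_zero x k : sin x = 0 -> sin (INR k * x) = 0.
Proof.
  intros H. induction k. simpl. rewrite Rmult_0_l; apply sin_0.
  rewrite S_INR. replace ((INR k + 1) * x) with (INR k * x + x) by ring.
  rewrite sin_plus, IHk, H. ring.
Qed.

Lemma Csum_const1 (l : list nat) : Csum (map (fun _ => RtoC 1) l) = RtoC (INR (length l)).
Proof.
  induction l; simpl. reflexivity. rewrite IHl. destruct (length l).
  unfold RtoC, Cplus; simpl; f_equal; ring.
  unfold RtoC, Cplus; simpl; f_equal; ring.
Qed.

Lemma geom N t :
  Csum (map (fun a => cis (2 * PI * INR a * t)) (seq 0 N)) =
  Cmult (cis (PI * (INR N - 1) * t)) (RtoC (sinq N t)).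
Proof.
  set (x := PI * t).
  unfold sinq. replace (PI * INR N * t) with (INR N * x) by (unfold x; ring).
  fold x. replace (PI * (INR N - 1) * t) with (INR N * x - x) by (unfold x; ring).
  destruct (Req_EM_T (sin x) 0) as [H0|H0].
  - rewrite (map_ext_in _ (fun _ => RtoC 1)).
    2:{ intros a _. replace (2 * PI * INR a * t) with (2 * (INR a * x)) by (unfold x; ring).
        unfold cis, RtoC. rewrite cos_2a_sin, sin_2a, sin_mult_zero by auto. f_equal; ring. }
    rewrite Csum_const1, length_seq.
    assert (Hc : cos x * cos x = 1) by (pose proof (sin2_cos2 x); unfold Rsqr in *; nra).
    assert (Hs : sin (INR N * x) = 0) by (apply sin_mult_zero; auto).
    assert (HC : cos (INR N * x) * cos (INR N * x) = 1)
      by (pose proof (sin2_cos2 (INR N * x)); unfold Rsqr in *; nra).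
    assert (cos x <> 0) by (intro E; rewrite E in Hc; lra).
    unfold cis, Cmult, RtoC; simpl. rewrite cos_minus, sin_minus, Hs, H0.
    f_equal.
    + replace ((cos (INR N * x) * cos x + 0 * 0) * (INR N * cos (INR N * x) / cos x) -
               (0 * cos x - cos (INR N * x) * 0) * 0)
        with (INR N * (cos (INR N * x) * cos (INR N * x))) by (field; auto).
      rewrite HC; ring.
    + field; auto.
  - assert (Q : forall N, Cmult (Csum (map (fun a => cis (2 * PI * INR a * t)) (seq 0 N))) (RtoC (sin x))
                 = Cmult (cis (INR N * x - x)) (RtoC (sin (INR N * x)))).
    { clear N. induction N.
      - simpl. unfold cis, Cmult, RtoC; simpl. rewrite (Rmult_0_l x), sin_0. f_equal; ring.
      - rewrite seq_S, map_app, Csum_app, S_INR. simpl. rewrite Cmult_plus_distr_r, IHN.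
        replace (2 * PI * INR N * t) with (INR N * x + INR N * x) by (unfold x; ring).
        replace ((INR N + 1) * x - x) with (INR N * x) by ring.
        replace ((INR N + 1) * x) with (INR N * x + x) by ring.
        unfold cis, Cmult, Cplus, RtoC; simpl.
        rewrite !cos_minus, !sin_minus, !cos_plus, !sin_plus. f_equal; ring. }
    transitivity (Cmult (Cmult (Csum (map (fun a => cis (2 * PI * INR a * t)) (seq 0 N))) (RtoC (sin x))) (RtoC (/ sin x))).
    + rewrite <- Cmult_assoc, <- RtoC_mult, Rinv_r by auto. rewrite Cmult_1_r. reflexivity.
    + rewrite Q, <- Cmult_assoc, <- RtoC_mult. reflexivity.
Qed.

Definition F (t : R) (z : Z) : C := cis (2 * PI * IZR z * t).
Definition F' (t : R) (z : Z) : C := if Z.eqb z 0 then RtoC 0 else F t z.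

Lemma Csum_cons x l : Csum (x :: l) = Cplus x (Csum l).
Proof. reflexivity. Qed.

Lemma sumF n t : Csum (map (F t) (rn n)) = Cmult (cis (PI * (INR (S n) - 1) * t)) (RtoC (sinq (S n) t)).
Proof.
  unfold rn. rewrite map_map, <- geom. f_equal. apply map_ext. intro a.
  unfold F. rewrite <- INR_IZR_INZ. reflexivity.
Qed.

Lemma sumF' n t : Csum (map (F' t) (rn n)) = Cmult (cis (PI * (INR n + 1) * t)) (RtoC (sinq n t)).
Proof.
  unfold rn. change (seq 0 (S n)) with (0%nat :: seq 1 n).
  rewrite map_cons, map_cons, Csum_cons.
  replace (F' t (Z.of_nat 0)) with (RtoC 0) by reflexivity.
  rewrite <- seq_shift, !map_map.
  rewrite (map_ext _ (fun a => Cmult (cis (2 * PI * t)) (cis (2 * PI * INR a * t)))).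
  2:{ intro a. unfold F'. destruct (Z.eqb_spec (Z.of_nat (S a)) 0). lia.
      unfold F. rewrite cis_add. f_equal. rewrite <- INR_IZR_INZ, S_INR. ring. }
  rewrite Csum_scal_l, geom, Cmult_assoc, cis_add.
  replace (2 * PI * t + PI * (INR n - 1) * t) with (PI * (INR n + 1) * t) by ring.
  ring.
Qed.

Lemma G_phi t1 t2 t3 t4 a b c d (Ht : t1 + t2 + t3 + t4 = 0) :
  cis (PI / 2 * dot4 (phi (a,b,c,d)) t1 t2 t3 t4) =
  Cmult (Cmult (Cmult (F t1 a) (F t2 b)) (F t3 c)) (F t4 d).
Proof.
  unfold F. rewrite !cis_add. f_equal. unfold phi, dot4.
  rewrite !minus_IZR, !plus_IZR, !mult_IZR.
  replace t4 with (-(t1+t2+t3)) by lra. field.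
Qed.

Theorem theorem3p10 (n : nat) (t1 t2 t3 t4 : R) (Ht : t1 + t2 + t3 + t4 = 0) :
  DH n t1 t2 t3 t4 = RtoC (Theta (S n) t1 t2 t3 t4 - Theta n t1 t2 t3 t4).
Proof.
  unfold DH.
  rewrite <- (Csum_perm _ _ (Permutation_map (fun k => cis (PI / 2 * dot4 k t1 t2 t3 t4)) (key_perm n))).
  rewrite map_map, Csum_map_filter.
  rewrite (map_ext _ (fun m => Cminus
     ((fun m : Z*Z*Z*Z => let '(a,b,c,d) := m in
        Cmult (Cmult (Cmult (F t1 a) (F t2 b)) (F t3 c)) (F t4 d)) m)
     ((fun m : Z*Z*Z*Z => let '(a,b,c,d) := m in
        Cmult (Cmult (Cmult (F' t1 a) (F' t2 b)) (F' t3 c)) (F' t4 d)) m))).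
  2:{ intros [[[a b] c] d]. rewrite G_phi by auto. unfold hz, F'.
      destruct (Z.eqb a 0), (Z.eqb b 0), (Z.eqb c 0), (Z.eqb d 0); simpl; ring. }
  rewrite Csum_map_sub. unfold P. rewrite !Csum_prod4, !sumF, !sumF', !cisR_mult.
  match goal with |- Cminus (Cmult (cis ?A) _) (Cmult (cis ?B) _) = _ =>
    replace A with 0 by (replace t4 with (-(t1+t2+t3)) by lra; ring);
    replace B with 0 by (replace t4 with (-(t1+t2+t3)) by lra; ring) end.
  unfold Theta, cis, Cmult, Cminus, Cplus, Copp, RtoC; simpl. rewrite cos_0, sin_0.
  f_equal; ring.
Qed.
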